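(* Let $A$ and $B$ be bounded lattices and let $(\alpha,\beta)$ be a retractable Galois connection between $A$ and $B$ such that $\beta(0)=0$. (i) If $b,b'\in B$ are such that $\beta(b)$ is essential in $[0,\beta(b')]$, then $b\wedge b'$ is essential in $[0,b']$. (ii) If $a,a'\in A$ are such that $a$ is essential in $[0,a']$ and $a'$ is a Galois element, then $\alpha(a)$ is essential in $[0,\alpha(a')]$. Assume in addition that either (E) $(\alpha,\beta)$ is essential, or (C) $(\alpha,\beta)$ is cyclically essential and $A$ is cyclically generated. Then: (iii) If $b,b'\in B$ are such that $b$ is essential in $[0,b']$, then $\beta(b)$ is essential in $[0,\beta(b')]$. (iv) If $a,a'\in A$ (where, in case (C), $a$ is additionally assumed to be cyclic) are such that $\alpha(a)$ is essential in $[0,\alpha(a')]$, then $a\wedge a'$ is essential in $[0,a']$.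
   Context: A bounded lattice $(A,\wedge,\vee,0,1)$ has least element $0$ and greatest element $1$, with $0\neq1$; $[a,a']=\{x: a\le x\le a'\}$. A Galois connection between lattices $A$ and $B$ is a pair of order-preserving maps $\alpha:A\to B$, $\beta:B\to A$ such that $\alpha(a)\le b$ iff $a\le\beta(b)$ for all $a\in A$, $b\in B$. An element $a\in A$ is Galois if $\beta\alpha(a)=a$. For $a\le c$, $a$ is essential in $[0,c]$ if for every $x\le c$, $a\wedge x=0$ implies $x=0$. An element $a$ is cyclic if $[0,a]$ is a distributive lattice satisfying the ascending chain condition; $A$ is cyclically generated if every element of $A$ is a join of cyclic elements. The Galois connection is essential (resp. cyclically essential) if for every $a\in A$ (resp. every cyclic $a\in A$), $a$ is essential in $[0,\beta\alpha(a)]$; it is retractable if for every $b\in B$, $\alpha\beta(b)$ is essential in $[0,b]$. *)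

(* Defs.v *)
From mathcomp Require Import all_boot all_order.
Set Implicit Arguments. Unset Strict Implicit. Unset Printing Implicit Defensive.
Import Order.TTheory.
Local Open Scope order_scope.

Definition galois_connection {dA dB} {A : tbLatticeType dA} {B : tbLatticeType dB}
  (alpha : A -> B) (beta : B -> A) : Prop :=
  [/\ {homo alpha : x y / x <= y}, {homo beta : x y / x <= y} &
      forall (a : A) (b : B), (alpha a <= b) <-> (a <= beta b)].

Definition galois_elt {dA dB} {A : tbLatticeType dA} {B : tbLatticeType dB}
  (alpha : A -> B) (beta : B -> A) (a : A) : Prop := beta (alpha a) = a.

Definition essential_in {d} {T : tbLatticeType d} (a c : T) : Prop :=
  a <= c /\ forall x : T, x <= c -> a `&` x = \bot -> x = \bot.

Definition distrib_below {d} {T : tbLatticeType d} (a : T) : Prop :=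
  forall x y z : T, x <= a -> y <= a -> z <= a ->
    x `&` (y `|` z) = (x `&` y) `|` (x `&` z).

Definition acc_below {d} {T : tbLatticeType d} (a : T) : Prop :=
  ~ exists f : nat -> T, (forall n, f n <= a) /\ (forall n, f n < f n.+1).

Definition cyclic {d} {T : tbLatticeType d} (a : T) : Prop :=
  distrib_below a /\ acc_below a.

Definition is_join_of {d} {T : tbLatticeType d} (S : T -> Prop) (a : T) : Prop :=
  (forall x, S x -> x <= a) /\ (forall u, (forall x, S x -> x <= u) -> a <= u).

Definition cyclically_generated {d} (T : tbLatticeType d) : Prop :=
  forall a : T, exists S : T -> Prop, (forall x, S x -> cyclic x) /\ is_join_of S a.

Definition essential_gc {dA dB} {A : tbLatticeType dA} {B : tbLatticeType dB}
  (alpha : A -> B) (beta : B -> A) : Prop :=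
  forall a : A, essential_in a (beta (alpha a)).

Definition cyclically_essential_gc {dA dB} {A : tbLatticeType dA} {B : tbLatticeType dB}
  (alpha : A -> B) (beta : B -> A) : Prop :=
  forall a : A, cyclic a -> essential_in a (beta (alpha a)).

Definition retractable_gc {dA dB} {A : tbLatticeType dA} {B : tbLatticeType dB}
  (alpha : A -> B) (beta : B -> A) : Prop :=
  forall b : B, essential_in (alpha (beta b)) b.

(* Main.v *)
Require Import Defs.
From mathcomp Require Import all_boot all_order.
Import Order.TTheory.
Local Open Scope order_scope.
Set Implicit Arguments. Unset Strict Implicit.

Lemma bot_of {d} {T : tbLatticeType d} (x : T) : x <= \bot -> x = \bot.
Proof. by move=> h; apply/eqP; rewrite -lex0. Qed.

Section S.
Context (dA dB : Order.disp_t) (A : tbLatticeType dA) (B : tbLatticeType dB)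
  (alpha : A -> B) (beta : B -> A).

Lemma alpha0 : galois_connection alpha beta -> alpha \bot = \bot.
Proof. by case=> _ _ adj; apply: bot_of; apply/adj; exact: le0x. Qed.

Lemma unit_le : galois_connection alpha beta -> forall x, x <= beta (alpha x).
Proof. by case=> _ _ adj x; apply/adj. Qed.

Lemma counit_le : galois_connection alpha beta -> forall y, alpha (beta y) <= y.
Proof. by case=> _ _ adj y; apply/adj. Qed.

Lemma ret_bot : galois_connection alpha beta -> retractable_gc alpha beta ->
  forall y, beta y = \bot -> y = \bot.
Proof.
move=> gc ret y hy; case: (ret y) => _ /(_ y (lexx y)); apply.
by rewrite hy (alpha0 gc); apply: bot_of; rewrite leIl.
Qed.

Lemma key3 : galois_connection alpha beta -> retractable_gc alpha beta ->
  beta \bot = \bot ->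
  forall b b' (c : A), essential_in b b' -> essential_in c (beta (alpha c)) ->
  c <= beta b' -> beta b `&` c = \bot -> c = \bot.
Proof.
move=> gc ret b0 b b' c [_ eb] [_ ec] cb' hc.
have [ma mb adj] := gc.
have hy : beta (b `&` alpha c) = \bot.
  apply: ec.
    by apply: mb; rewrite leIr.
  apply: bot_of; rewrite -hc meetC; apply: leI2 => //.
  by apply: mb; rewrite leIl.
have y0 := ret_bot gc ret hy.
have ac : alpha c = \bot by apply: eb y0; apply/adj.
by apply: bot_of; apply: le_trans (unit_le gc c) _; rewrite ac b0.
Qed.

Lemma key4 : galois_connection alpha beta -> retractable_gc alpha beta ->
  beta \bot = \bot ->
  forall a a' (c : A), essential_in (alpha a) (alpha a') ->
  essential_in a (beta (alpha a)) -> essential_in c (beta (alpha c)) ->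
  c <= a' -> a `&` c = \bot -> c = \bot.
Proof.
move=> gc ret b0 a a' c [_ eA] [_ ea] [_ ec] ca' hc.
have [ma mb adj] := gc.
have h1 : a `&` beta (alpha c) = \bot.
  apply: ec; first by rewrite leIr.
  by rewrite meetA (meetC c) hc; apply: bot_of; rewrite leIl.
have hy : beta (alpha a `&` alpha c) = \bot.
  apply: ea; first by apply: mb; rewrite leIl.
  apply: bot_of; rewrite -h1; apply: leI2 => //.
  by apply: mb; rewrite leIr.
have y0 := ret_bot gc ret hy.
have ac : alpha c = \bot by apply: eA y0; apply: ma.
by apply: bot_of; apply: le_trans (unit_le gc c) _; rewrite ac b0.
Qed.

End S.

Lemma gen_bot {d} {T : tbLatticeType d} : cyclically_generated T ->
  forall x : T, (forall c, cyclic c -> c <= x -> c = \bot) -> x = \bot.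
Proof.
move=> cg x h; have [S [cS [ub lub]]] := cg x.
apply: bot_of; apply: lub => y Sy; rewrite (h y (cS y Sy) (ub y Sy)) //.
Qed.

Theorem lemma2p7 (dA dB : Order.disp_t) (A : tbLatticeType dA) (B : tbLatticeType dB)
  (alpha : A -> B) (beta : B -> A) :
  (\bot : A) != \top -> (\bot : B) != \top ->
  galois_connection alpha beta -> retractable_gc alpha beta ->
  beta \bot = \bot ->
  (* (i) *)
  (forall b b' : B, essential_in (beta b) (beta b') -> essential_in (b `&` b') b') /\
  (* (ii) *)
  (forall a a' : A, essential_in a a' -> galois_elt alpha beta a' ->
     essential_in (alpha a) (alpha a')) /\
  (* case (E): (iii) and (iv) *)
  (essential_gc alpha beta ->
     (forall b b' : B, essential_in b b' -> essential_in (beta b) (beta b')) /\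
     (forall a a' : A, essential_in (alpha a) (alpha a') -> essential_in (a `&` a') a')) /\
  (* case (C): (iii) and (iv) with a cyclic *)
  (cyclically_essential_gc alpha beta -> cyclically_generated A ->
     (forall b b' : B, essential_in b b' -> essential_in (beta b) (beta b')) /\
     (forall a a' : A, cyclic a -> essential_in (alpha a) (alpha a') ->
        essential_in (a `&` a') a')).
Proof.
move=> _ _ gc ret b0.
have [ma mb adj] := gc.
have bmeet : forall b x : B, beta b `&` beta x <= beta (b `&` x).
  move=> b x; apply/adj; rewrite lexI; apply/andP; split.
    by apply: (le_trans _ (counit_le gc b)); apply: ma; rewrite leIl.
  by apply: (le_trans _ (counit_le gc x)); apply: ma; rewrite leIr.
have mle : forall (a a' x : A), x <= a' -> a `&` a' `&` x = a `&` x.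
  by move=> a a' x xa'; rewrite -meetA; congr (_ `&` _); apply/meet_idPr.
have mleB : forall (a a' x : B), x <= a' -> a `&` a' `&` x = a `&` x.
  by move=> a a' x xa'; rewrite -meetA; congr (_ `&` _); apply/meet_idPr.
have iii : forall b b' : B, essential_in b b' -> 
    (forall c, c <= beta b' -> beta b `&` c = \bot -> c = \bot) ->
    essential_in (beta b) (beta b').
  move=> b b' [bb' _] h; split; [exact: mb | exact: h].
have iv : forall a a' : A, (forall c, c <= a' -> a `&` c = \bot -> c = \bot) ->
    essential_in (a `&` a') a'.
  move=> a a' h; split; first by rewrite leIr.
  by move=> x xa'; rewrite mle //; apply: h.
split.
  move=> b b' [_ e]; split; first by rewrite leIr.
  move=> x xb'; rewrite mleB // => hx.
  apply: (ret_bot gc ret); apply: e; first exact: mb.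
  by apply: bot_of; rewrite -b0 -hx; apply: bmeet.
split.
  move=> a a' [aa' e] ga; split; first exact: ma.
  move=> y ya' hy; apply: (ret_bot gc ret); apply: e.
    by rewrite -ga; apply: mb.
  apply: bot_of; rewrite -b0; apply/adj; rewrite -hy.
  apply: (le_trans _ (leI2 (lexx _) (counit_le gc y))).
  by rewrite lexI; apply/andP; split; apply: ma; rewrite ?leIl ?leIr.
split.
  move=> ess; split.
    move=> b b' eb; apply: iii => // c; exact: key3 gc ret b0 b b' c eb (ess c).
  move=> a a' ea; apply: iv => c; exact: key4 gc ret b0 a a' c ea (ess a) (ess c).
move=> cess cg; split.
  move=> b b' eb; apply: iii => // x xb' hx; apply: (gen_bot cg) => c cc cx.
  apply: (key3 gc ret b0 eb (cess c cc)); first exact: le_trans xb'.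
  apply: bot_of; rewrite -hx; apply: leI2 => //.
move=> a a' ca ea; apply: iv => x xa' hx; apply: (gen_bot cg) => c cc cx.
apply: (key4 gc ret b0 ea (cess a ca) (cess c cc)); first exact: le_trans xa'.
apply: bot_of; rewrite -hx; apply: leI2 => //.
Qed.
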